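(* Let $k$ be an algebraically closed field of characteristic $0$ and $d\ge3$. For each integer $m\ge1$ let $V_m$ have basis $v_1,\dots,v_m$ with symmetric $d$-linear form $\Theta_d(v_{i_1},\dots,v_{i_d})=1$ if $i_1+\dots+i_d=(d-1)m+1$ and $0$ otherwise, let $\mathcal{L}(m,d)=\{L\in\mathfrak{gl}(V_m):\sum_{i=1}^d\Theta_d(u_1,\dots,L(u_i),\dots,u_d)=0\ \forall u_j\in V_m\}$, and let $D_m(v_i)=(m-1-d(m-i))v_i$. For $n\ge2$ let $\iota:V_n\to V_{n+1}$, $\iota(v_i)=v_i$, $\pi:V_{n+1}\to V_n$, $\pi(v_i)=v_{i-1}$ (with $v_0=0$), and $\rho(f)=\iota\circ f\circ\pi$. Then for every $n\ge2$, $\mathcal{L}(n+1,d)=\rho(\mathcal{L}(n,d))\oplus kD_{n+1}$ and $\dim_k\mathcal{L}(n,d)=n-1$. *)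

(* Defs.v *)
From HB Require Import structures.
From mathcomp Require Import all_boot all_order all_algebra all_field.
Set Implicit Arguments. Unset Strict Implicit. Unset Printing Implicit Defensive.
Import Order.TTheory GRing.Theory Num.Theory.
Local Open Scope ring_scope.

(* Conventions: V_m = 'rV[k]_m, basis vector v_i (1 <= i <= m) is the
   (i-1)-th standard row vector (0-based index i-1 : 'I_m).
   A linear map f on V_m is a matrix A : 'M_m acting by u |-> u *m A. *)

Section Defs.
Variable k : fieldType.

Definition Theta (d m : nat) (u : 'I_d -> 'rV[k]_m) : k :=
  \sum_(t : {ffun 'I_d -> 'I_m})
     (if (\sum_(j < d) (t j).+1)%N == ((d - 1) * m + 1)%N then 1 else 0)
     * \prod_(j < d) u j 0 (t j).

Definition inL (m d : nat) (L : 'M[k]_m) : Prop :=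
  forall u : 'I_d -> 'rV[k]_m,
    \sum_(i < d) Theta (fun j => if j == i then u j *m L else u j) = 0.

Definition Dm (m d : nat) : 'M[k]_m :=
  \matrix_(i < m, j < m)
    (if i == j then ((m.-1)%:Z - (d * (m - i.+1))%:Z)%:~R else 0).

Definition iotamx (n : nat) : 'M[k]_(n, n.+1) :=
  \matrix_(i < n, j < n.+1) (if (i : nat) == (j : nat) then 1 else 0).

Definition pimx (n : nat) : 'M[k]_(n.+1, n) :=
  \matrix_(i < n.+1, j < n) (if (i : nat) == j.+1 then 1 else 0).

(* rho(f) = iota o f o pi ; with row-vector action u |-> u *m A,
   the composite u |-> iota (f (pi u)) is u *m (pimx *m A *m iotamx). *)
Definition rho (n : nat) (A : 'M[k]_n) : 'M[k]_n.+1 :=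
  pimx n *m A *m iotamx n.

End Defs.
Arguments Theta {k} d m u.
Arguments inL {k} m d L.
Arguments Dm {k} m d.
Arguments iotamx {k} n.
Arguments pimx {k} n.
Arguments rho {k} n A.

(* Main.v *)
Require Import Defs.
From HB Require Import structures.
From mathcomp Require Import all_boot all_order all_algebra all_field.
From mathcomp Require Import zify ring.
Import Order.TTheory GRing.Theory Num.Theory.
Local Open Scope ring_scope.
Set Implicit Arguments. Unset Strict Implicit. Unset Printing Implicit Defensive.


Section Key.
Variable k : fieldType.
Variables d m : nat.

Definition upd (t : {ffun 'I_d -> 'I_m}) (i : 'I_d) (x : 'I_m) : {ffun 'I_d -> 'I_m} :=
  [ffun j => if j == i then x else t j].

Definition Pt (t : {ffun 'I_d -> 'I_m}) : bool :=
  (\sum_(j < d) (t j).+1)%N == ((d - 1) * m + 1)%N.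

Definition Cexp (L : 'M[k]_m) (b : {ffun 'I_d -> 'I_m}) : k :=
  \sum_(i < d) \sum_(x < m) (if Pt (upd b i x) then 1 else 0) * L (b i) x.

Lemma upd_id t i x : upd t i x i = x.
Proof. by rewrite /upd ffunE eqxx. Qed.

Lemma updK t i x : upd (upd t i x) i (t i) = t.
Proof. apply/ffunP => j; rewrite !ffunE; case: eqP => // ->. by []. Qed.

Lemma prod_upd (u : 'I_d -> 'rV[k]_m) t i x :
  \prod_(j < d) u j 0 (upd t i x j) = u i 0 x * \prod_(j < d | j != i) u j 0 (t j).
Proof.
rewrite (bigD1 i) //= upd_id; congr (_ * _); apply: eq_bigr => j /negbTE hj.
by rewrite /upd ffunE hj.
Qed.

Lemma key (L : 'M[k]_m) (u : 'I_d -> 'rV[k]_m) :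
  \sum_(i < d) Theta d m (fun j => if j == i then u j *m L else u j) =
  \sum_(t : {ffun 'I_d -> 'I_m}) (\prod_(j < d) u j 0 (t j)) * Cexp L t.
Proof.
rewrite /Cexp. under [RHS]eq_bigr => t _ do rewrite mulr_sumr.
rewrite [RHS]exchange_big /=; apply: eq_bigr => i _.
rewrite /Theta.
transitivity (\sum_(t : {ffun 'I_d -> 'I_m}) \sum_(c < m)
   (if Pt t then 1 else 0) * (u i 0 c * L c (t i) * \prod_(j < d | j != i) u j 0 (t j))).
  apply: eq_bigr => t _.
  rewrite [\prod_(j < d) _](bigD1 i) //= eqxx mxE big_distrl /= mulr_sumr /Pt; apply: eq_bigr => c _.
  congr (_ * (_ * _)).
  by apply: eq_bigr => j /negbTE ->.
under [RHS]eq_bigr => t _ do rewrite mulr_sumr.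
rewrite !pair_big /=.
pose s (p : {ffun 'I_d -> 'I_m} * 'I_m) := (upd p.1 i p.2, p.1 i).
have sK : involutive s by case=> t c; rewrite /s /= updK upd_id.
rewrite [RHS](reindex_inj (inv_inj sK)) /=.
apply: eq_bigr => -[t c] _ /=.
rewrite updK upd_id prod_upd.
set A := u i 0 c; set B := \prod_(_ < _ | _) _; set C := L c (t i).
by rewrite mulrC -!mulrA; congr (_ * _); rewrite mulrC -mulrA; congr (_ * _); rewrite mulrC.
Qed.

Lemma inL_Cexp (L : 'M[k]_m) : inL m d L <-> forall b, Cexp L b = 0.
Proof.
split.
- move=> hL b. have := hL (fun j => delta_mx 0 (b j)).
  rewrite key (bigD1 b) //=.
  rewrite [X in _ * _ + X]big1.
    rewrite big1 ?mul1r ?addr0 //; move=> j _; by rewrite mxE !eqxx.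
  move=> t /eqP htb.
  have [j hj] : exists j, t j != b j.
    case: (pickP (fun j => t j != b j)) => [j hj|h]; first by exists j.
    by exfalso; apply: htb; apply/ffunP => j; move: (h j) => /negbFE/eqP.
  by rewrite (bigD1 j) //= mxE (negbTE hj) andbF !mul0r.
- move=> h u; rewrite key big1 // => t _; by rewrite h mulr0.
Qed.
End Key.


Section Two.
Variable k : fieldType.

Definition Sb d m (b : {ffun 'I_d -> 'I_m}) : nat := (\sum_(j < d) (b j).+1)%N.

Lemma Pt_upd d m (b : {ffun 'I_d -> 'I_m}) i x :
  Pt (upd b i x) = ((x + Sb b)%N == (b i + ((d - 1) * m + 1))%N).
Proof.
have h : ((\sum_(j < d) (upd b i x j).+1) + (b i).+1 = x.+1 + Sb b)%N.
  rewrite /Sb (bigD1 i) //= [in RHS](bigD1 i) //= upd_id.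
  have -> : (\sum_(j < d | j != i) (upd b i x j).+1 = \sum_(j < d | j != i) (b j).+1)%N.
    by apply: eq_bigr => j /negbTE hj; rewrite /upd ffunE hj.
  by rewrite -addnA [(\sum_(j < d | j != i) _ + _)%N]addnC.
rewrite /Pt; apply/eqP/eqP; lia.
Qed.

Lemma Cexp_alt d m (L : 'M[k]_m) (b : {ffun 'I_d -> 'I_m}) :
  Cexp L b = \sum_(i < d) \sum_(x < m)
     (if ((x + Sb b)%N == (b i + ((d - 1) * m + 1))%N) then L (b i) x else 0).
Proof.
apply: eq_bigr => i _; apply: eq_bigr => x _; rewrite Pt_upd.
by case: ifP; rewrite ?mul1r ?mul0r.
Qed.

Lemma Cexp_lin d m (a : k) (L1 L2 : 'M[k]_m) (b : {ffun 'I_d -> 'I_m}) :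
  Cexp (a *: L1 + L2) b = a * Cexp L1 b + Cexp L2 b.
Proof.
rewrite /Cexp mulr_sumr -big_split; apply: eq_bigr => i _.
rewrite mulr_sumr -big_split; apply: eq_bigr => x _.
rewrite !mxE /=; case: (Pt _); rewrite ?mul1r ?mul0r ?mulr0 ?addr0 //.
Qed.

Lemma rho_ord0 n (A : 'M[k]_n) y : rho n A ord0 y = 0.
Proof.
rewrite /rho mxE big1 // => l _; rewrite mxE big1 ?mul0r // => j _.
by rewrite mxE /= mul0r.
Qed.

Lemma rho_max n (A : 'M[k]_n) x : rho n A x ord_max = 0.
Proof.
rewrite /rho mxE big1 // => l _; rewrite mxE /=.
by rewrite [iotamx n l _]mxE /= (ltn_eqF (ltn_ord l)) mulr0.
Qed.

Lemma rho_lift n (A : 'M[k]_n) (i j : 'I_n) :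
  rho n A (lift ord0 i) (widen_ord (leqnSn n) j) = A i j.
Proof.
rewrite /rho mxE (bigD1 j) //= big1 ?addr0.
  rewrite [iotamx _ _ _]mxE /= eqxx mulr1 mxE (bigD1 i) //= big1 ?addr0.
    by rewrite mxE /bump /= eqxx mul1r.
  move=> l hl; rewrite mxE /bump /= eqSS; case: eqP => [/val_inj hil|]; [by rewrite hil eqxx in hl | by rewrite mul0r].
move=> l hl; rewrite [iotamx n l _]mxE /=.
by case: eqP => [/val_inj hlj|]; [rewrite hlj eqxx in hl | rewrite mulr0].
Qed.

End Two.


Section Comb.
Variable k : fieldType.
Hypothesis hc : [pchar k] =i pred0.

Lemma natr_neq0 n : (0 < n)%N -> (n%:R : k) != 0.
Proof. by move=> hn; rewrite (proj1 (pcharf0P k) hc) -lt0n. Qed.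

Lemma mul_natr0 n (x : k) : (0 < n)%N -> n%:R * x = 0 -> x = 0.
Proof. by move=> hn /eqP; rewrite mulf_eq0 (negbTE (natr_neq0 hn)) /= => /eqP. Qed.

Lemma sum0_eq (a b : k) : a + b = 0 -> a = - b.
Proof. by move/eqP; rewrite addr_eq0 => /eqP. Qed.

Variables (M d' : nat) (f : nat -> nat -> k).
Hypothesis hz : forall x y, (M < y)%N -> f x y = 0.
Hypothesis hC : forall p q r e, (p <= M)%N -> (q <= M)%N -> (r <= M)%N ->
  (p + q + r + e = 2 * M)%N ->
  f p (p + e) + f q (q + e) + f r (r + e) + d'%:R * f M (M + e) = 0.

Lemma F1 e x : (1 <= e)%N -> (x + e <= M)%N -> f x (x + e) = 0.
Proof.
move=> he hxe.
have aM : f M (M + e) = 0 by apply: hz; lia.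
set al := f (M - 1) (M - 1 + e).
have mv : forall y, (y <= M - e)%N -> f y.+1 (y.+1 + e) = f y (y + e) - al.
  move=> y hy.
  have h1 := hC (p := y) (q := M) (r := M - e - y) (e := e).
  have h2 := hC (p := y.+1) (q := M - 1) (r := M - e - y) (e := e).
  rewrite aM mulr0 !addr0 in h1 h2.
  have {}h1 := h1 ltac:(lia) ltac:(lia) ltac:(lia) ltac:(lia).
  have {}h2 := h2 ltac:(lia) ltac:(lia) ltac:(lia) ltac:(lia).
  move: h1 h2; rewrite -!addrA => /sum0_eq -> /sum0_eq ->.
  rewrite /al; ring.
have lin : forall y, (y <= M - e + 1)%N -> f y (y + e) = f 0 e - y%:R * al.
  elim=> [|y IH] hy; first by rewrite add0n mul0r subr0.
  rewrite mv; last by lia.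
  rewrite IH; last by lia.
  rewrite -addn1 natrD; ring.
have E1 : f 0 e = (M - e + 1)%:R * al.
  have := lin (M - e + 1)%N (leqnn _).
  rewrite hz; last by lia.
  by move/eqP; rewrite eq_sym subr_eq0 => /eqP.
have E2 : f 0 e + f (M - e) (M - e + e) = 0.
  have := hC (p := 0) (q := M) (r := M - e) (e := e).
  rewrite add0n aM mulr0 !addr0; apply; lia.
rewrite lin ?E2 in E2; last by lia.
have hal : al = 0.
  apply: (@mul_natr0 (M - e).+2); first by [].
  rewrite E1 in E2; move: E2.
  rewrite natrD -addn2 natrD => <-. ring.
rewrite lin; last by lia.
by rewrite E1 hal !mulr0 subr0.
Qed.

Lemma F2 x : (1 <= M)%N -> f 0 0 = 0 -> (x <= M)%N -> f x x = 0.
Proof.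
move=> hM h0 hx.
set de := f M M - f (M - 1) (M - 1).
have mv : forall y, (y < M)%N -> f y.+1 y.+1 = f y y + de.
  move=> y hy.
  have h1 := hC (p := y) (q := M) (r := M - y) (e := 0).
  have h2 := hC (p := y.+1) (q := M - 1) (r := M - y) (e := 0).
  rewrite !addn0 in h1 h2.
  have {}h1 := h1 ltac:(lia) ltac:(lia) ltac:(lia) ltac:(lia).
  have {}h2 := h2 ltac:(lia) ltac:(lia) ltac:(lia) ltac:(lia).
  move: h1 h2; rewrite -!addrA => /sum0_eq -> /sum0_eq ->.
  rewrite /de; ring.
have lin : forall y, (y <= M)%N -> f y y = y%:R * de.
  elim=> [|y IH] hy; first by rewrite h0 mul0r.
  rewrite mv; last by lia.
  rewrite IH; last by lia.
  rewrite -addn1 natrD; ring.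
have hMM : f M M = 0.
  have := hC (p := 0) (q := M) (r := M) (e := 0).
  rewrite !addn0 h0 add0r => /(_ ltac:(lia) ltac:(lia) ltac:(lia) ltac:(lia)) h.
  apply: (@mul_natr0 d'.+2); first by [].
  rewrite -h -addn2 natrD; ring.
have hde : de = 0.
  apply: (@mul_natr0 M); first by [].
  by rewrite -lin // hMM.
by rewrite lin // hde mulr0.
Qed.
End Comb.


Section Four.
Variable k : fieldType.
Variable M : nat.

Definition Lf (L : 'M[k]_M.+1) (x y : nat) : k :=
  if (x <= M)%N && (y <= M)%N then L (inord x) (inord y) else 0.

Lemma sum_if_eq (F : 'I_M.+1 -> k) z :
  \sum_(x < M.+1) (if (x : nat) == z then F x else 0) =
  if (z <= M)%N then F (inord z) else 0.
Proof.
case: leqP => hz.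
  rewrite (bigD1 (inord z)) //= inordK // eqxx big1 ?addr0 // => x hx.
  case: eqP => // hxz; exfalso; move/eqP: hx; apply; apply/val_inj.
  by rewrite /= inordK.
rewrite big1 // => x _; case: eqP => // hxz.
by have := ltn_ord x; rewrite hxz ltnS leqNgt hz.
Qed.

Lemma gterm (L : 'M[k]_M.+1) y S N e : (y <= M)%N -> (S + e = N)%N ->
  \sum_(x < M.+1) (if (x + S == (inord y : 'I_M.+1) + N)%N then L (inord y) x else 0)
  = Lf L y (y + e).
Proof.
move=> hy hSe; rewrite inordK //.
transitivity (\sum_(x < M.+1) (if (x : nat) == (y + e)%N then L (inord y) x else 0)).
  apply: eq_bigr => x _.
  have -> : (x + S == y + N)%N = ((x : nat) == y + e)%N by apply/eqP/eqP; lia.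
  by [].
by rewrite sum_if_eq /Lf hy.
Qed.

Variable d' : nat.

Definition vv (p q r : nat) (j : nat) : nat :=
  if j == 0%N then p else if j == 1%N then q else if j == 2%N then r else M.

Definition tup3 (p q r : nat) : {ffun 'I_d'.+3 -> 'I_M.+1} :=
  [ffun j : 'I_d'.+3 => inord (vv p q r j)].

Lemma vv_le p q r j : (p <= M)%N -> (q <= M)%N -> (r <= M)%N -> (vv p q r j <= M)%N.
Proof. by rewrite /vv; do 3 case: ifP => _ //. Qed.

Lemma Cond3 (L : 'M[k]_M.+1) (hL : forall b : {ffun 'I_d'.+3 -> 'I_M.+1}, Cexp L b = 0) p q r e :
  (p <= M)%N -> (q <= M)%N -> (r <= M)%N -> (p + q + r + e = 2 * M)%N ->
  Lf L p (p + e) + Lf L q (q + e) + Lf L r (r + e) + d'%:R * Lf L M (M + e) = 0.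
Proof.
move=> hp hq hr hs.
have := hL (tup3 p q r); rewrite Cexp_alt.
have hS : Sb (tup3 p q r) = (p + q + r + 3 + d' * M.+1)%N.
  rewrite /Sb !big_ord_recl /= !ffunE /= !inordK //.
  rewrite (eq_bigr (fun _ => M.+1)); last first.
    by move=> i _; rewrite ffunE /= inordK.
  rewrite sum_nat_const card_ord /bump /vv /=; lia.
move=> H0; rewrite -{}[RHS]H0.
rewrite (_ : \sum_(i < d'.+3) _ = \sum_(i < d'.+3) Lf L (vv p q r i) (vv p q r i + e)); last first.
  apply: eq_bigr => i _; rewrite ffunE; apply: gterm; first exact: vv_le.
  rewrite hS; lia.
rewrite !big_ord_recl /=.
rewrite (eq_bigr (fun _ => Lf L M (M + e))); last by move=> i _.
rewrite sumr_const card_ord !addrA.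
by rewrite /bump /vv /= mulr_natl.
Qed.

Hypothesis hc : [pchar k] =i pred0.

Lemma tri (L : 'M[k]_M.+1) (hL : forall b : {ffun 'I_d'.+3 -> 'I_M.+1}, Cexp L b = 0)
  (i j : 'I_M.+1) : (i < j)%N -> L i j = 0.
Proof.
move=> hij.
have := @F1 k hc M d' (Lf L) _ (Cond3 hL) (j - i) i.
rewrite subnKC; last by lia.
have hz : forall x y, (M < y)%N -> Lf L x y = 0.
  by move=> x y hy; rewrite /Lf (leqNgt y) hy andbF.
have hi : (i <= M)%N by rewrite -ltnS.
have hj : (j <= M)%N by rewrite -ltnS.
move/(_ hz); rewrite subn_gt0 hij hj => /(_ isT isT).
by rewrite /Lf hi hj /= !inord_val.
Qed.

Lemma diag0 (L : 'M[k]_M.+1) (hL : forall b : {ffun 'I_d'.+3 -> 'I_M.+1}, Cexp L b = 0)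
  (hM : (1 <= M)%N) (h00 : L ord0 ord0 = 0) (i : 'I_M.+1) : L i i = 0.
Proof.
have hz : forall x y, (M < y)%N -> Lf L x y = 0.
  by move=> x y hy; rewrite /Lf (leqNgt y) hy andbF.
have hi : (i <= M)%N by rewrite -ltnS.
have := @F2 k hc M d' (Lf L) (Cond3 hL) i hM.
rewrite /Lf hi /= !inord_val; apply => //.
by rewrite (_ : inord 0 = ord0) //; apply/val_inj; rewrite /= inordK.
Qed.

End Four.


Section Five.
Variable k : fieldType.

Lemma Sb_lift d n (b' : {ffun 'I_d -> 'I_n}) :
  Sb [ffun j => lift ord0 (b' j)] = (Sb b' + d)%N.
Proof.
rewrite /Sb (eq_bigr (fun j => (b' j).+1 + 1)%N); last first.
  by move=> j _; rewrite ffunE lift0 addn1.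
by rewrite big_split /= sum_nat_const card_ord muln1.
Qed.

Lemma Cexp_rho_lift d n (hd : (1 <= d)%N) (A : 'M[k]_n) (b' : {ffun 'I_d -> 'I_n}) :
  Cexp (rho n A) [ffun j => lift ord0 (b' j)] = Cexp A b'.
Proof.
rewrite !Cexp_alt Sb_lift; apply: eq_bigr => i _; rewrite ffunE.
rewrite big_ord_recr /= rho_max.
set z := (if _ then _ else _); have -> : z = 0 by rewrite /z; case: ifP.
rewrite addr0; apply: eq_bigr => x _.
rewrite rho_lift /bump leq0n add1n.
have -> : (x + (Sb b' + d) == (b' i).+1 + ((d - 1) * n.+1 + 1))%N =
          (x + Sb b' == b' i + ((d - 1) * n + 1))%N.
  rewrite mulnS; apply/eqP/eqP; lia.
by [].
Qed.

Lemma Sb_bound d n (b : {ffun 'I_d -> 'I_n.+1}) i r :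
  i != r -> b r = ord0 -> (Sb b + n + (n - b i) <= d * n.+1)%N.
Proof.
move=> hir hr.
have h : (\sum_(j < d) ((b j).+1 + (if j == r then n else 0) + (if j == i then n - b j else 0))
          <= \sum_(j < d) n.+1)%N.
  apply: leq_sum => j _.
  case: (eqVneq j r) => [->|hjr]; first by rewrite eq_sym (negbTE hir) hr /=; lia.
  case: (eqVneq j i) => [->|hji]; have := ltn_ord (b j); have := ltn_ord (b i); lia.
rewrite !big_split /= sum_nat_const card_ord in h.
rewrite -big_mkcond big_pred1_eq -big_mkcond big_pred1_eq in h.
by [].
Qed.


Lemma dm1 d n : (1 <= d)%N -> ((d - 1) * n + n = d * n)%N.
Proof. by case: d => // d' _; rewrite subn1 /= mulSn addnC. Qed.

Lemma Cexp_rho_zero d n (hd : (1 <= d)%N) (A : 'M[k]_n) (b : {ffun 'I_d -> 'I_n.+1}) r :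
  b r = ord0 -> Cexp (rho n A) b = 0.
Proof.
move=> hr; rewrite Cexp_alt big1 // => i _.
case: (eqVneq i r) => [->|hir].
  by rewrite big1 // => x _; rewrite hr rho_ord0; case: ifP.
have hB := Sb_bound hir hr.
rewrite big_ord_recr /= rho_max.
set z := (if _ then _ else _); have -> : z = 0 by rewrite /z; case: ifP.
rewrite addr0 big1 // => x _.
case: eqP => // hx; exfalso.
have := ltn_ord x; have := ltn_ord (b i); move: hx hB; rewrite /=.
have := dm1 n.+1 hd.
lia.
Qed.

Lemma Cexp_D m d (hd : (1 <= d)%N) (b : {ffun 'I_d -> 'I_m}) : Cexp (Dm m d : 'M[k]_m) b = 0.
Proof.
rewrite Cexp_alt.
have inner : forall i, \sum_(x < m) (if (x + Sb b == b i + ((d - 1) * m + 1))%N then Dm m d (b i) x else 0)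
   = if Sb b == ((d - 1) * m + 1)%N then ((m.-1)%:R - (d * (m - (b i).+1))%:R) else (0 : k).
  move=> i; rewrite (bigD1 (b i)) //= big1 ?addr0.
    rewrite mxE eqxx eqn_add2l; case: ifP => // _.
    by rewrite rmorphB /=.
  by move=> x hx; rewrite mxE [_ == x]eq_sym (negbTE hx); case: ifP.
rewrite (eq_bigr _ (fun i _ => inner i)); case: eqP => hS; last by rewrite big1.
rewrite sumrB -!natr_sum.
have hm : (0 < m)%N by case: m b {inner hS} => [|//] b; have := ltn_ord (b (Ordinal hd)).
have e1 : (\sum_(i < d) (m - (b i).+1) + Sb b = d * m)%N.
  rewrite /Sb -big_split /= (eq_bigr (fun _ => m)); first by rewrite sum_nat_const card_ord.
  by move=> i _; rewrite subnK.
rewrite -big_distrr /= sum_nat_const card_ord.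
have -> : (\sum_(i < d) (m - (b i).+1) = m.-1)%N.
  move: e1; rewrite hS.
  have := dm1 m hd.
  lia.
by rewrite mulnC subrr.
Qed.

Lemma D00 (hc : [pchar k] =i pred0) n d (hn : (1 <= n)%N) (hd : (2 <= d)%N) :
  Dm n.+1 d ord0 ord0 != 0 :> k.
Proof.
rewrite mxE eqxx /= subn1 /= rmorphB /=.
rewrite -(dm1 n (ltnW hd)).
rewrite PoszD rmorphD /= opprD addrCA subrr addr0 oppr_eq0.
rewrite [X in X != 0](_ : _ = ((d - 1) * n)%:R) //.
apply: natr_neq0 => //; rewrite muln_gt0 hn andbT; lia.
Qed.
End Five.


Section Six.
Variable k : fieldType.
Hypothesis hc : [pchar k] =i pred0.
Variable d' : nat.
Local Notation d := d'.+3.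

Definition CL n (L : 'M[k]_n) := forall b : {ffun 'I_d -> 'I_n}, Cexp L b = 0.

Lemma CL_lin n a (L1 L2 : 'M[k]_n) : CL L1 -> CL L2 -> CL (a *: L1 + L2).
Proof. by move=> h1 h2 b; rewrite Cexp_lin h1 h2 mulr0 addr0. Qed.

Lemma CL_D n : CL (Dm n d : 'M[k]_n).
Proof. by move=> b; apply: Cexp_D. Qed.

Lemma CL_rho n (A : 'M[k]_n) : CL A -> CL (rho n A).
Proof.
move=> hA b.
case: (pickP (fun j => b j == ord0)) => [r /eqP hr|h0].
  exact: Cexp_rho_zero hr.
have hpos : forall j, (0 < b j)%N.
  move=> j; rewrite lt0n; apply/negP => /eqP hj; move: (h0 j).
  by rewrite (_ : b j = ord0) ?eqxx //; apply/val_inj.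
have hlt : forall j, ((b j).-1 < n)%N.
  by move=> j; have := ltn_ord (b j); have := hpos j; lia.
pose b' := [ffun j => Ordinal (hlt j)].
have -> : b = [ffun j => lift ord0 (b' j)].
  apply/ffunP => j; rewrite !ffunE; apply/val_inj; rewrite /= /bump leq0n add1n /=.
  by rewrite prednK.
by rewrite Cexp_rho_lift.
Qed.

Lemma recur n (hn : (1 <= n)%N) (L : 'M[k]_n.+1) :
  CL L <-> exists (A : 'M[k]_n) (c : k), CL A /\ L = rho n A + c *: Dm n.+1 d.
Proof.
split; last first.
  move=> [A [c [hA ->]]]; rewrite addrC; apply: CL_lin; [exact: CL_D | exact: CL_rho].
move=> hL.
set D := (Dm n.+1 d : 'M[k]_n.+1).
have hD0 : D ord0 ord0 != 0 by apply: D00.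
set c := L ord0 ord0 / D ord0 ord0.
set L' := (- c) *: D + L.
have hL' : CL L' by apply: CL_lin => //; apply: CL_D.
have h00 : L' ord0 ord0 = 0.
  by rewrite /L' mxE [fun_of_matrix (_ *: _) _ _]mxE /c mulNr divfK // addrC subrr.
have htri := tri hc hL'.
have hdiag := diag0 hc hL' hn h00.
pose A := \matrix_(i < n, j < n) L' (lift ord0 i) (widen_ord (leqnSn n) j).
have hcase : forall y : 'I_n.+1, y = ord_max \/ exists j : 'I_n, y = widen_ord (leqnSn n) j.
  move=> y; case: (ltnP y n) => h; [right; exists (Ordinal h) | left]; apply/val_inj => //=.
  by have := ltn_ord y; lia.
have eL' : L' = rho n A.
  apply/matrixP => x y.
  case: (unliftP ord0 x) => [i ->|->].
    case: (hcase y) => [->|[j ->]]; last by rewrite [RHS](@rho_lift k n A i j) /A [RHS]mxE.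
    rewrite rho_max.
    case: (eqVneq (lift ord0 i) ord_max) => [->|hne]; first exact: hdiag.
    apply: htri; have := ltn_ord (lift ord0 i); move: hne => /eqP hne.
    have : (lift ord0 i : nat) != n by apply/eqP => e; apply: hne; apply/val_inj.
    rewrite /=; lia.
  rewrite rho_ord0.
  case: (eqVneq y ord0) => [->|hne]; first exact: h00.
  apply: htri; rewrite lt0n; apply/eqP => e; move/eqP: hne; apply; apply/val_inj; exact: e.
exists A, c; split.
  move=> b'; rewrite -Cexp_rho_lift // -eL'; exact: hL'.
by rewrite -eL' /L' addrAC -scalerDl addNr scale0r add0r.
Qed.


Lemma direct n (hn : (1 <= n)%N) (A : 'M[k]_n) (c : k) :
  rho n A + c *: Dm n.+1 d = 0 -> rho n A = 0 /\ c = 0.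
Proof.
move=> h.
have h0 := congr1 (fun M : 'M[k]_n.+1 => M ord0 ord0) h.
move: h0; rewrite /= mxE [fun_of_matrix (_ *: _) _ _]mxE rho_ord0 add0r [fun_of_matrix 0 _ _]mxE.
move/eqP; rewrite mulf_eq0 (negbTE (D00 hc hn _)) // orbF => /eqP hc0.
by move: h; rewrite hc0 scale0r addr0.
Qed.

Lemma rho_inj n (A : 'M[k]_n) : rho n A = 0 -> A = 0.
Proof. by move=> h; apply/matrixP => i j; rewrite -(rho_lift A i j) h !mxE. Qed.

Lemma dimL n : (1 <= n)%N -> exists U : {vspace 'M[k]_n},
  (forall L, L \in U <-> CL L) /\ \dim U = (n - 1)%N.
Proof.
elim: n => [//|n IH] _.
case: (posnP n) => [->|hn1].
  exists 0%VS; split; last by rewrite dimv0.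
  move=> L; rewrite memv0; split.
    move/eqP => -> b; rewrite /Cexp big1 // => i _; rewrite big1 // => x _.
    by rewrite mxE mulr0.
  move=> hL; have := hL [ffun _ => ord0]; rewrite Cexp_alt.
  have hS : Sb [ffun _ : 'I_d => (ord0 : 'I_1)] = d.
    rewrite /Sb (eq_bigr (fun _ => 1%N)) ?sum_nat_const ?card_ord ?muln1 // => j _.
    by rewrite ffunE.
  rewrite (eq_bigr (fun _ => L ord0 ord0)); last first.
    move=> i _; rewrite big_ord1 ffunE hS /= muln1 addn1 eqxx.
    by [].
  rewrite sumr_const card_ord -mulr_natl => /(mul_natr0 hc) // h0.
  by apply/eqP/matrixP => i j; rewrite !ord1 mxE; apply: h0.
have [U [hU dU]] := IH hn1.
pose f := (linfun (mulmxr (iotamx n)) \o linfun (mulmx (pimx n)))%VF :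
   'Hom('M[k]_n, 'M[k]_n.+1).
have hf : forall A, f A = rho n A.
  by move=> A; rewrite comp_lfunE !lfunE /= /rho.
set D := (Dm n.+1 d : 'M[k]_n.+1).
exists (f @: U + <[D]>)%VS; split.
  move=> L; split.
    move/memv_addP => [w /memv_imgP[A hA ->] [v /vlineP[c ->] ->]].
    rewrite hf; apply/(recur hn1); exists A, c; split => //; exact/hU.
  move/(recur hn1) => [A [c [hA ->]]].
  apply/memv_addP; exists (f A).
    by apply/memv_imgP; exists A => //; apply/hU.
  exists (c *: D); last by rewrite hf.
  by apply/vlineP; exists c.
have hD0 : D != 0.
  apply/negP => /eqP hD; have := D00 hc hn1 (isT : (2 <= d)%N).
  by rewrite -/D hD mxE eqxx.
rewrite dimv_disjoint_sum.
  rewrite limg_dim_eq.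
    by rewrite dU dim_vline hD0 /=; lia.
  apply/eqP; rewrite -subv0; apply/subvP => w; rewrite memv_cap memv_ker memv0.
  by case/andP => _; rewrite hf => /eqP/rho_inj ->.
apply/eqP; rewrite -subv0; apply/subvP => w; rewrite memv_cap memv0.
case/andP => /memv_imgP[A hA ->] /vlineP[c]; rewrite hf => e.
have : rho n A + (- c) *: D = 0 by rewrite e scaleNr subrr.
by case/(direct hn1) => -> _.
Qed.

End Six.


Unset Implicit Arguments.
Theorem theorem3p11 (k : closedFieldType) (hchar : [pchar k] =i pred0)
  (d : nat) (hd : (3 <= d)%N) (n : nat) (hn : (2 <= n)%N) :
  (* L(n+1,d) = rho(L(n,d)) + k D_{n+1} *)
  (forall L : 'M[k]_n.+1,
      inL n.+1 d L <-> exists (A : 'M[k]_n) (c : k), inL n d A /\ L = rho n A + c *: Dm n.+1 d)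
  (* the sum is direct *)
  /\ (forall (A : 'M[k]_n) (c : k),
        inL n d A -> rho n A + c *: Dm n.+1 d = 0 -> rho n A = 0 /\ c = 0)
  (* dim_k L(n,d) = n - 1 *)
  /\ (exists U : {vspace 'M[k]_n},
        (forall L : 'M[k]_n, L \in U <-> inL n d L) /\ \dim U = (n - 1)%N).
Proof.
case: d hd => [|[|[|d']]] // _.
have hn1 : (1 <= n)%N by apply: ltnW.
split.
  move=> L; split.
    move/inL_Cexp/(recur hchar d' hn1) => [A [c [hA ->]]].
    by exists A, c; split => //; apply/inL_Cexp.
  move=> [A [c [hA ->]]]; apply/inL_Cexp/(recur hchar d' hn1).
  by exists A, c; split => //; apply/inL_Cexp.
split.
  by move=> A c _ h; exact: (direct hchar (d':=d') hn1 h).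
have [U [hU dU]] := dimL hchar d' hn1.
exists U; split => // L; split.
  by move/hU/inL_Cexp.
by move/inL_Cexp/hU.
Qed.
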